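(* Let $f:2^{[n]}\to\mathbb{R}$ be submodular with $f(\emptyset)=0$. Let $x\in[0,1]^n$ and $d\in\mathbb{R}^n_{\ge 0}$, and let $S=\{i: d_i\neq 0\}$. If $y=x+d\in[0,1]^n$, then $g(y)_i\le g(x)_i$ for all $i\notin S$. If instead $y=x-d\in[0,1]^n$, then $g(y)_i\ge g(x)_i$ for all $i\notin S$.
   Context: Notation: $[n]=\{1,\dots,n\}$. For a permutation $P=(P_1,\dots,P_n)$ of $[n]$, write $P[j]=\{P_1,\dots,P_j\}$ for $0\le j\le n$ (so $P[0]=\emptyset$). For $x\in\mathbb{R}^n$, the permutation $P_x$ consistent with $x$ is the permutation with $x_{P_1}\ge x_{P_2}\ge\dots\ge x_{P_n}$, ties broken lexicographically (among equal coordinates, the smaller index comes first). The Lovász subgradient of $f$ at $x\in[0,1]^n$ is the vector $g(x)\in\mathbb{R}^n$ defined by $g(x)_{P_k}=f(P[k])-f(P[k-1])$ for $k\in[n]$, where $P=P_x$. *)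

(* Defs.v *)
From HB Require Import structures.
From mathcomp Require Import all_boot all_order all_algebra.
Set Implicit Arguments. Unset Strict Implicit. Unset Printing Implicit Defensive.
Import Order.TTheory GRing.Theory Num.Theory.
Local Open Scope ring_scope.

(* Ground set [n] is represented by 'I_n = {0,..,n-1}; 2^[n] by {set 'I_n}. *)

Definition submodular (R : numDomainType) (n : nat) (f : {set 'I_n} -> R) :=
  forall A B : {set 'I_n}, f (A :|: B) + f (A :&: B) <= f A + f B.

Definition in_unit_cube (R : numDomainType) (n : nat) (x : 'I_n -> R) :=
  forall i, 0 <= x i <= 1.

(* Order used for P_x: j comes before k iff x_j > x_k, or x_j = x_k and j <= k
   (ties broken lexicographically: smaller index first). *)
Definition before (R : numDomainType) (n : nat) (x : 'I_n -> R) : rel 'I_n :=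
  fun j k => (x k < x j) || ((x j == x k) && (j <= k)%N).

(* The permutation P_x consistent with x, as the sequence (P_1, ..., P_n). *)
Definition perm_of (R : numDomainType) (n : nat) (x : 'I_n -> R) : seq 'I_n :=
  sort (before x) (enum 'I_n).

Definition prefix_set (n : nat) (P : seq 'I_n) (j : nat) : {set 'I_n} :=
  [set i in take j P].

(* Lovász subgradient: g(x)_{P_k} = f(P[k]) - f(P[k-1]); with 0-based position
   p = index i P of i, i = P_{p+1}, so g(x)_i = f(P[p+1]) - f(P[p]). *)
Definition lovasz_subgrad (R : numDomainType) (n : nat) (f : {set 'I_n} -> R)
    (x : 'I_n -> R) (i : 'I_n) : R :=
  let P := perm_of x in
  let p := index i P in
  f (prefix_set P p.+1) - f (prefix_set P p).

Definition support_set (R : numDomainType) (n : nat) (d : 'I_n -> R) : {set 'I_n} :=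
  [set i | d i != 0].

(* Main.v *)
Require Import Defs.
From HB Require Import structures.
From mathcomp Require Import all_boot all_order all_algebra.
From mathcomp Require Import lra.
Import Order.TTheory GRing.Theory Num.Theory.
Local Open Scope ring_scope.

Section Aux.
Variables (R : realFieldType) (n : nat).

Lemma before_trans (x : 'I_n -> R) : transitive (before x).
Proof.
move=> k j l; rewrite /before.
move=> /orP[h1|/andP[/eqP e1 h1]] /orP[h2|/andP[/eqP e2 h2]].
- by rewrite (lt_trans h2 h1).
- by rewrite -e2 h1.
- by rewrite e1 h2.
- by rewrite e1 e2 eqxx (leq_trans h1 h2) orbT.
Qed.

Lemma before_total (x : 'I_n -> R) : total (before x).
Proof.
move=> j k; rewrite /before; case: (ltgtP (x k) (x j)) => //= e.
by rewrite leq_total.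
Qed.

Lemma before_antisym (x : 'I_n -> R) j k :
  before x j k -> before x k j -> j = k.
Proof.
rewrite /before => /orP[h1|/andP[/eqP e1 h1]] /orP[h2|/andP[/eqP e2 h2]].
- by move: (lt_trans h1 h2); rewrite ltxx.
- by move: h1; rewrite e2 ltxx.
- by move: h2; rewrite e1 ltxx.
- by apply: val_inj; apply/eqP; rewrite eqn_leq h1 h2.
Qed.

Lemma mem_perm (x : 'I_n -> R) j : j \in perm_of x.
Proof. by rewrite /perm_of mem_sort mem_enum. Qed.

Lemma prefix_mem (x : 'I_n -> R) (i j : 'I_n) :
  (j \in prefix_set (perm_of x) (index i (perm_of x))) =
  (before x j i && (j != i)).
Proof.
rewrite /prefix_set inE in_take ?mem_perm //.
set s := perm_of x.
have ss : sorted (before x) s by apply: sort_sorted; exact: before_total.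
have ji := mem_perm x j; have ii := mem_perm x i.
have us : uniq s by rewrite sort_uniq enum_uniq.
case: (ltngtP (index j s) (index i s)) => h.
- have := sorted_ltn_nth (@before_trans x) j ss.
  move=> /(_ (index j s) (index i s)); rewrite !inE !index_mem ji ii.
  move=> /(_ isT isT h); rewrite nth_index // nth_index // => H.
  rewrite H /=; apply/esym/eqP => e; by move: h; rewrite e ltnn.
- have := sorted_ltn_nth (@before_trans x) j ss.
  move=> /(_ (index i s) (index j s)); rewrite !inE !index_mem ji ii.
  move=> /(_ isT isT h); rewrite nth_index // nth_index // => H.
  case B: (before x j i) => //=.
  by move: (@before_antisym x j i B H) => e; rewrite e; case: eqP.
- by move/(congr1 (nth j s)): h; rewrite !nth_index // => ->; case: eqP; rewrite ?andbF.
Qed.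

Lemma prefix_memS (x : 'I_n -> R) (i j : 'I_n) :
  (j \in prefix_set (perm_of x) (index i (perm_of x)).+1) =
  (j == i) || (j \in prefix_set (perm_of x) (index i (perm_of x))).
Proof.
rewrite /prefix_set !inE !in_take ?mem_perm // ltnS leq_eqVlt.
case: (j =P i) => [->|ne]; first by rewrite !eqxx.
case: (index j (perm_of x) =P index i (perm_of x)) => [e|//]; exfalso; apply: ne.
by have := congr1 (nth j (perm_of x)) e; rewrite !nth_index ?mem_perm.
Qed.

Lemma subgradE (f : {set 'I_n} -> R) (x : 'I_n -> R) (i : 'I_n) :
  lovasz_subgrad f x i =
  f (i |: [set j | before x j i && (j != i)]) - f [set j | before x j i && (j != i)].
Proof.
rewrite /lovasz_subgrad /=; congr (f _ - f _); apply/setP => j.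
- by rewrite prefix_memS prefix_mem !inE.
- by rewrite prefix_mem !inE.
Qed.

Lemma submod_mono (f : {set 'I_n} -> R) (hsub : submodular f) (A B : {set 'I_n}) i :
  A \subset B -> i \notin B -> f (i |: B) - f B <= f (i |: A) - f A.
Proof.
move=> AB iB; have := hsub (i |: A) B.
have -> : (i |: A) :|: B = i |: B by rewrite -setUA (setUidPr AB).
have -> : (i |: A) :&: B = A.
  apply/setP => j; rewrite !inE.
  case: (boolP (j \in A)) => jA; first by rewrite orbT (subsetP AB).
  rewrite orbF; case: (boolP (j \in B)) => jB; rewrite ?andbT ?andbF //.
  by apply/eqP => e; move: iB; rewrite -e jB.
by move=> h; lra.
Qed.

End Aux.

Theorem lemma3p3 (R : realFieldType) (n : nat) (f : {set 'I_n} -> R)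
    (hsub : submodular f) (hf0 : f set0 = 0)
    (x d : 'I_n -> R) (hx : in_unit_cube x) (hd : forall i, 0 <= d i) :
  (in_unit_cube (fun i => x i + d i) ->
     forall i, i \notin support_set d ->
       lovasz_subgrad f (fun j => x j + d j) i <= lovasz_subgrad f x i) /\
  (in_unit_cube (fun i => x i - d i) ->
     forall i, i \notin support_set d ->
       lovasz_subgrad f x i <= lovasz_subgrad f (fun j => x j - d j) i).
Proof.
split=> _ i; rewrite inE negbK => /eqP di; rewrite !subgradE;
  (apply: submod_mono => //; last by rewrite inE eqxx andbF);
  apply/subsetP => j; rewrite !inE => /andP[bj ->]; rewrite andbT;
  move: bj; rewrite /before di ?addr0 ?subr0.
- move=> /orP[h|/andP[/eqP e h]].
    by rewrite (lt_le_trans h) // lerDl.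
  rewrite e; have := hd j; rewrite le_eqVlt => /orP[/eqP<-|p].
    by rewrite addr0 eqxx h orbT.
  by rewrite ltrDl p.
- move=> /orP[h|/andP[/eqP e h]].
    by rewrite (lt_le_trans h) // lerBlDr lerDl.
  rewrite -e; have := hd j; rewrite le_eqVlt => /orP[/eqP<-|p].
    by rewrite subr0 eqxx h orbT.
  by rewrite ltrBlDr ltrDl p.
Qed.
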